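(* Let $(W,S)$ be a Coxeter system with $S$ finite such that all elements of $Q_W$ are conjugate in $W$ (i.e. $c(W)=1$). Identify $C_W$ with $\mathbb{Z}$ via $e_s^2\mapsto1$ ($s\in S$). Define $\tau_\rho:W\times W\to\mathbb{Z}$ by $\tau_\rho(w_1,w_2)=1$ if $\ell(w_1)$ and $\ell(w_2)$ are both odd, and $\tau_\rho(w_1,w_2)=0$ otherwise, where $\ell$ is the length function with respect to $S$. Then $\tau_\rho$ is a normalized $2$-cocycle and $[\tau_\rho]=u_\phi\in H^2(W,\mathbb{Z})$, where $u_\phi$ is the class of the central extension $0\to\mathbb{Z}\to\operatorname{Ad}(Q_W)\xrightarrow{\phi}W\to1$.
   Context: A Coxeter system $(W,S)$: $S$ finite, $m:S\times S\to\mathbb{N}\cup\{\infty\}$ with $m(s,s)=1$, $2\le m(s,t)=m(t,s)\le\infty$ for $s\ne t$, $W=\langle s\in S\mid (st)^{m(s,t)}=1\ (m(s,t)<\infty)\rangle$. The Coxeter quandle $Q_W=\bigcup_{w\in W}w^{-1}Sw$ has operation $x\ast y=yxy$; $\operatorname{Ad}(Q_W)=\langle e_x\ (x\in Q_W)\mid e_y^{-1}e_xe_y=e_{x\ast y}\rangle$; $\phi:\operatorname{Ad}(Q_W)\to W$ is $e_x\mapsto x$ and $C_W=\ker\phi$, a central subgroup. $c(W)$ is the number of $W$-conjugacy classes in $Q_W$. When $c(W)=1$, $C_W$ is infinite cyclic generated by $e_s^2$, and $e_s^2$ is the same element for all $s\in S$, so the identification is well defined. *)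

(* Defs.v *)
From Stdlib Require Import ZArith.
From mathcomp Require Import all_boot.

Set Implicit Arguments.
Unset Strict Implicit.
Unset Printing Implicit Defensive.

Record Grp := {
  carrier :> Type;
  gmul : carrier -> carrier -> carrier;
  gone : carrier;
  ginv : carrier -> carrier;
  gmulA : forall x y z, gmul x (gmul y z) = gmul (gmul x y) z;
  gmul1l : forall x, gmul gone x = x;
  gmul1r : forall x, gmul x gone = x;
  gmulVl : forall x, gmul (ginv x) x = gone;
  gmulVr : forall x, gmul x (ginv x) = gone
}.

Arguments gmul {g} _ _.
Arguments gone {g}.
Arguments ginv {g} _.

Fixpoint gpow (G : Grp) (x : G) (n : nat) : G :=
  match n with 0 => gone | S k => gmul x (gpow x k) end.

Definition gzpow (G : Grp) (x : G) (n : Z) : G :=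
  match n with
  | Z0 => gone
  | Zpos p => gpow x (Pos.to_nat p)
  | Zneg p => ginv (gpow x (Pos.to_nat p))
  end.

Definition hom (G H : Grp) (h : G -> H) : Prop :=
  forall x y, h (gmul x y) = gmul (h x) (h y).

(* G is the group presented by generators gen : X -> G subject to the
   relations rels (a relation set is described by what it means for an
   assignment f : X -> H in an arbitrary group H to satisfy it):
   gen satisfies the relations, and for every group H and every assignment
   satisfying them there is a unique homomorphism extending it. *)
Definition is_presentation (G : Grp) (X : Type) (gen : X -> G)
  (rels : forall H : Grp, (X -> H) -> Prop) : Prop :=
  rels G gen /\
  forall (H : Grp) (f : X -> H), rels H f ->
    exists h : G -> H, hom h /\ (forall x, h (gen x) = f x) /\
      (forall h' : G -> H, hom h' -> (forall x, h' (gen x) = f x) ->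
         forall g, h' g = h g).

(* m s t = None encodes m(s,t) = infinity *)
Definition coxeter_matrix (S : finType) (m : S -> S -> option nat) : Prop :=
  forall s t : S,
    m s t = m t s /\
    (s = t -> m s t = Some 1) /\
    (s <> t -> match m s t with Some k => (2 <= k)%N | None => true end).

Definition cox_rels (S : finType) (m : S -> S -> option nat)
  (H : Grp) (f : S -> H) : Prop :=
  forall (s t : S) (k : nat), m s t = Some k -> gpow (gmul (f s) (f t)) k = gone.

Definition word_prod (S : finType) (W : Grp) (iota : S -> W) (l : seq S) : W :=
  foldr (fun s acc => gmul (iota s) acc) gone l.

Definition is_length (S : finType) (W : Grp) (iota : S -> W) (w : W) (n : nat)
  : Prop :=
  (exists l : seq S, size l = n /\ word_prod iota l = w) /\
  (forall l : seq S, word_prod iota l = w -> (n <= size l)%N).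

Definition in_QW (S : finType) (W : Grp) (iota : S -> W) (x : W) : Prop :=
  exists (w : W) (s : S), x = gmul (gmul (ginv w) (iota s)) w.

Definition QW (S : finType) (W : Grp) (iota : S -> W) : Type :=
  { x : W | in_QW iota x }.

(* relations of Ad(Q_W): e_y^{-1} e_x e_y = e_{x * y}, with x * y = y x y *)
Definition ad_rels (S : finType) (W : Grp) (iota : S -> W)
  (H : Grp) (e : QW iota -> H) : Prop :=
  forall x y z : QW iota,
    proj1_sig z = gmul (gmul (proj1_sig y) (proj1_sig x)) (proj1_sig y) ->
    gmul (gmul (ginv (e y)) (e x)) (e y) = e z.

Definition one_conj_class (S : finType) (W : Grp) (iota : S -> W) : Prop :=
  (exists x : W, in_QW iota x) /\
  forall x y : QW iota, exists w : W,
    proj1_sig y = gmul (gmul (ginv w) (proj1_sig x)) w.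

Definition normalized_2cocycle (W : Grp) (t : W -> W -> Z) : Prop :=
  (forall w, t gone w = 0%Z /\ t w gone = 0%Z) /\
  (forall a b c : W,
     (t b c - t (gmul a b) c + t a (gmul b c) - t a b)%Z = 0%Z).

Definition tau_rho (W : Grp) (l : W -> nat) (w1 w2 : W) : Z :=
  if odd (l w1) && odd (l w2) then 1%Z else 0%Z.

(* [t] equals the class u_phi of the central extension
   0 -> Z -> A -> W -> 1, where Z is identified with ker phi via n |-> z^n:
   there is a set-theoretic section sigma of phi whose extension cocycle
   f(a,b) (defined by sigma a * sigma b = z^f(a,b) * sigma (a b))
   differs from t by a coboundary dc(a,b) = c a - c (a b) + c b. *)
Definition class_eq_ext (A W : Grp) (phi : A -> W) (z : A)
  (t : W -> W -> Z) : Prop :=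
  exists (sigma : W -> A) (c : W -> Z),
    (forall w, phi (sigma w) = w) /\
    forall a b : W,
      gmul (sigma a) (sigma b) =
      gmul (gzpow z (t a b + c a - c (gmul a b) + c b)%Z) (sigma (gmul a b)).

Arguments cox_rels {S} m H f.
Arguments ad_rels {S W} iota H e.

(* Main.v *)
Require Import Defs.
From Stdlib Require Import ZArith Lia ProofIrrelevance ClassicalEpsilon FunctionalExtensionality PropExtensionality.
From mathcomp Require Import all_boot zify.

Lemma sig_eq {T : Type} {R : T -> Prop} (x y : {t | R t}) :
  proj1_sig x = proj1_sig y -> x = y.
Proof. case: x => x hx; case: y => y hy /= E; subst y; f_equal; apply proof_irrelevance. Qed.

Section GroupLemmas.
Context {G : Grp}.
Implicit Types x y : G.
Lemma mulKg x y : gmul (ginv x) (gmul x y) = y.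
Proof. by rewrite gmulA gmulVl gmul1l. Qed.
Lemma mulVKg x y : gmul x (gmul (ginv x) y) = y.
Proof. by rewrite gmulA gmulVr gmul1l. Qed.
Lemma mulgK x y : gmul (gmul y x) (ginv x) = y.
Proof. by rewrite -gmulA gmulVr gmul1r. Qed.
Lemma mulgVK x y : gmul (gmul y (ginv x)) x = y.
Proof. by rewrite -gmulA gmulVl gmul1r. Qed.
Lemma mulg_cancl x y y' : gmul x y = gmul x y' -> y = y'.
Proof. by move=> H; rewrite -(mulKg x y) H mulKg. Qed.
Lemma mulg_cancr x y y' : gmul y x = gmul y' x -> y = y'.
Proof. by move=> H; rewrite -(mulgK x y) H mulgK. Qed.
Lemma inv_uniq x y : gmul x y = gone -> y = ginv x.
Proof. by move=> H; apply (mulg_cancl x); rewrite H gmulVr. Qed.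
Lemma invgK x : ginv (ginv x) = x.
Proof. by symmetry; apply inv_uniq; apply gmulVl. Qed.
Lemma invMg x y : ginv (gmul x y) = gmul (ginv y) (ginv x).
Proof. by symmetry; apply inv_uniq; rewrite gmulA -(gmulA x y) gmulVr gmul1r gmulVr. Qed.
Lemma inv1 : ginv (@gone G) = gone.
Proof. by symmetry; apply inv_uniq; apply gmul1l. Qed.
Lemma gpow_add x m n : gpow x (m + n) = gmul (gpow x m) (gpow x n).
Proof. elim: m => [|m IH]; first by rewrite add0n /= gmul1l. by rewrite addSn /= IH gmulA. Qed.
Lemma gpowSr x n : gpow x n.+1 = gmul (gpow x n) x.
Proof. by rewrite -addn1 gpow_add /= gmul1r. Qed.
Lemma gpow_SS x n : gpow x n.+2 = gmul x (gmul (gpow x n) x).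
Proof. change (gmul x (gpow x n.+1) = gmul x (gmul (gpow x n) x)); by rewrite gpowSr. Qed.
Lemma gpow1 n : gpow (@gone G) n = gone.
Proof. by elim: n => //= n ->; rewrite gmul1l. Qed.
Lemma gpow_comm x m n : gmul (gpow x m) (gpow x n) = gmul (gpow x n) (gpow x m).
Proof. by rewrite -!gpow_add addnC. Qed.
Lemma comm_gpow x y n : gmul x y = gmul y x -> gmul (gpow x n) y = gmul y (gpow x n).
Proof.
move=> H; elim: n => /= [|n IH]; first by rewrite gmul1l gmul1r.
by rewrite -gmulA IH !gmulA H.
Qed.
End GroupLemmas.

Section Homs.
Context {G H : Grp}.
Variable h : G -> H.
Hypothesis Hh : hom h.
Lemma hom1 : h gone = gone.
Proof.
have := Hh gone gone; rewrite gmul1l => E.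
by apply (mulg_cancl (h gone)); rewrite gmul1r -E.
Qed.
Lemma homV x : h (ginv x) = ginv (h x).
Proof. by apply inv_uniq; rewrite -Hh gmulVr hom1. Qed.
Lemma hom_gpow x n : h (gpow x n) = gpow (h x) n.
Proof. by elim: n => /= [|n IH]; [exact hom1 | rewrite Hh IH]. Qed.
End Homs.

Definition Zgrp : Grp := {| carrier := Z; gmul := Z.add; gone := 0%Z; ginv := Z.opp;
  gmulA := Z.add_assoc; gmul1l := Z.add_0_l; gmul1r := Z.add_0_r;
  gmulVl := Z.add_opp_diag_l; gmulVr := Z.add_opp_diag_r |}.

Section Quotient.
Context {G : Grp}.
Variable z : G.
Hypothesis zc : forall g, gmul z g = gmul g z.

Lemma zpc n g : gmul (gpow z n) g = gmul g (gpow z n).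
Proof. exact: comm_gpow. Qed.

Definition zrel (a b : G) : Prop := exists m n, gmul (gpow z m) a = gmul (gpow z n) b.

Lemma zrel_refl a : zrel a a.
Proof. by exists 0%N, 0%N. Qed.
Lemma zrel_sym a b : zrel a b -> zrel b a.
Proof. by case=> m [n E]; exists n, m. Qed.
Lemma zmove m p a b : gmul (gmul (gpow z m) a) (gmul (gpow z p) b) = gmul (gpow z (m+p)) (gmul a b).
Proof. by rewrite gpow_add -!gmulA; congr gmul; rewrite gmulA -zpc gmulA. Qed.
Lemma zrel_trans a b c : zrel a b -> zrel b c -> zrel a c.
Proof.
case=> m [n E1] [p [q E2]]; exists (p + m)%N, (n + q)%N.
rewrite !gpow_add -!gmulA E1 !gmulA (gpow_comm z p n) -!gmulA; congr gmul.
by rewrite E2.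
Qed.
Lemma zrel_mul a a' b b' : zrel a a' -> zrel b b' -> zrel (gmul a b) (gmul a' b').
Proof.
case=> m [n E1] [p [q E2]]; exists (m + p)%N, (n + q)%N.
by rewrite -!zmove E1 E2.
Qed.
Lemma zrel_inv a a' : zrel a a' -> zrel (ginv a) (ginv a').
Proof.
case=> m [n E]; exists n, m.
have K k p b : gmul (gmul (gpow z k) (ginv b)) (gmul (gpow z p) b) = gmul (gpow z k) (gpow z p).
  by rewrite -gmulA (gmulA (ginv b)) -(zpc p (ginv b)) -gmulA gmulVl gmul1r.
apply (mulg_cancr (gmul (gpow z m) a)).
rewrite {2}E !K.
by rewrite gpow_comm.
Qed.

Definition Qt := {P : G -> Prop | exists a, P = zrel a}.
Definition cl (a : G) : Qt := exist _ (zrel a) (ex_intro _ a erefl).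
Definition rep (P : Qt) : G := proj1_sig (constructive_indefinite_description _ (proj2_sig P)).
Lemma rep_spec P : proj1_sig P = zrel (rep P).
Proof. rewrite /rep; case: (constructive_indefinite_description _ _) => //. Qed.
Lemma cl_rep P : cl (rep P) = P.
Proof. by apply sig_eq; rewrite /= -rep_spec. Qed.
Lemma clP P : exists a, P = cl a.
Proof. by exists (rep P); rewrite cl_rep. Qed.
Lemma cl_eq a b : zrel a b -> cl a = cl b.
Proof.
move=> H; apply sig_eq => /=; apply functional_extensionality => c.
apply propositional_extensionality; split => H'.
  exact: zrel_trans _ _ _ (zrel_sym _ _ H) H'.
exact: zrel_trans _ _ _ H H'.
Qed.
Lemma eq_cl a b : cl a = cl b -> zrel a b.
Proof.
move=> E; have: proj1_sig (cl a) = proj1_sig (cl b) by rewrite E.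
move=> /= E'; apply: zrel_sym; rewrite -E'; exact: zrel_refl.
Qed.
Lemma rep_cl a : zrel (rep (cl a)) a.
Proof. by apply eq_cl; rewrite cl_rep. Qed.

Definition mulQ (P R : Qt) : Qt := cl (gmul (rep P) (rep R)).
Definition invQ (P : Qt) : Qt := cl (ginv (rep P)).
Definition oneQ : Qt := cl gone.
Lemma mulQ_cl a b : mulQ (cl a) (cl b) = cl (gmul a b).
Proof. by apply cl_eq; apply zrel_mul; apply rep_cl. Qed.
Lemma invQ_cl a : invQ (cl a) = cl (ginv a).
Proof. by apply cl_eq; apply zrel_inv; apply rep_cl. Qed.

Lemma mulQA x y w : mulQ x (mulQ y w) = mulQ (mulQ x y) w.
Proof. case: (clP x) (clP y) (clP w) => [a ->] [b ->] [c ->]; by rewrite !mulQ_cl gmulA. Qed.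
Lemma mulQ1l x : mulQ oneQ x = x.
Proof. case: (clP x) => [a ->]; by rewrite mulQ_cl gmul1l. Qed.
Lemma mulQ1r x : mulQ x oneQ = x.
Proof. case: (clP x) => [a ->]; by rewrite mulQ_cl gmul1r. Qed.
Lemma mulQVl x : mulQ (invQ x) x = oneQ.
Proof. case: (clP x) => [a ->]; by rewrite invQ_cl mulQ_cl gmulVl. Qed.
Lemma mulQVr x : mulQ x (invQ x) = oneQ.
Proof. case: (clP x) => [a ->]; by rewrite invQ_cl mulQ_cl gmulVr. Qed.

Definition Qgrp : Grp := {| carrier := Qt; gmul := mulQ; gone := oneQ; ginv := invQ;
  gmulA := mulQA; gmul1l := mulQ1l; gmul1r := mulQ1r; gmulVl := mulQVl; gmulVr := mulQVr |}.

Lemma cl_hom : @hom G Qgrp cl.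
Proof. move=> a b; by rewrite /= mulQ_cl. Qed.

End Quotient.

Lemma Zgpow (x : Zgrp) k : @gpow Zgrp x k = (Z.of_nat k * x)%Z.
Proof. elim: k => //= k IH; rewrite IH; change (x + Z.of_nat k * x = Z.of_nat k.+1 * x)%Z; rewrite Nat2Z.inj_succ; ring. Qed.

Lemma gzpow_diff (G : Grp) (x : G) m n :
  gzpow x (Z.of_nat n - Z.of_nat m) = gmul (ginv (gpow x m)) (gpow x n).
Proof.
case: (leqP m n) => H.
  have ->: (Z.of_nat n - Z.of_nat m = Z.of_nat (n - m))%Z by lia.
  rewrite -{2}(subnKC H) gpow_add mulKg.
  case: (n - m)%N => //= k; by rewrite SuccNat2Pos.id_succ.
have [k Hk] : exists k, m = (n + k.+1)%N by exists (m - n.+1)%N; lia.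
have ->: (Z.of_nat n - Z.of_nat m = - Z.of_nat k.+1)%Z by lia.
rewrite Hk gpow_add invMg -gmulA gmulVl gmul1r /=.
by rewrite SuccNat2Pos.id_succ.
Qed.

Lemma conj_hom (G : Grp) (c : G) : hom (fun g => gmul (gmul c g) (ginv c)).
Proof. move=> a b; by rewrite !gmulA mulgVK. Qed.

Lemma nat_oddZ n : Z.of_nat n = ((if odd n then 1 else 0) + 2 * Z.of_nat n./2)%Z.
Proof. rewrite -{1}(odd_double_half n). case: (odd n); lia. Qed.

Lemma ad_Z (S : finType) (W : Grp) (iota : S -> W) : ad_rels iota Zgrp (fun _ => 1%Z).
Proof. by move=> x y w _. Qed.

Section Main.
Variables (S : finType) (m : S -> S -> option nat) (Hm : coxeter_matrix m)
  (W : Grp) (iota : S -> W) (HW : is_presentation iota (cox_rels m))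
  (Hc : one_conj_class iota)
  (A : Grp) (e : QW iota -> A) (HA : is_presentation e (ad_rels iota))
  (phi : A -> W) (Hphi : hom phi) (Hphie : forall x, phi (e x) = proj1_sig x)
  (l : W -> nat) (Hl : forall w : W, is_length iota w (l w)).

Lemma iota_inv s : gmul (iota s) (iota s) = gone.
Proof.
have := proj1 HW s s 1 (proj1 (proj2 (Hm s s)) erefl). by rewrite /= gmul1r.
Qed.
Lemma ginv_iota s : ginv (iota s) = iota s.
Proof. by symmetry; apply inv_uniq; apply iota_inv. Qed.
Lemma QW_inv (x : QW iota) : gmul (proj1_sig x) (proj1_sig x) = gone.
Proof.
case: x => x [w [s Hx]] /=; rewrite Hx.
by rewrite -!gmulA (gmulA w) gmulVr gmul1l (gmulA (iota s)) iota_inv gmul1l gmulVl.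
Qed.
Lemma QW_ginv (x : QW iota) : ginv (proj1_sig x) = proj1_sig x.
Proof. by symmetry; apply inv_uniq; apply QW_inv. Qed.
Lemma inQ_conj (g x : W) : in_QW iota x -> in_QW iota (gmul (gmul (ginv g) x) g).
Proof. case=> w [s ->]; exists (gmul w g), s. by rewrite invMg !gmulA. Qed.
Lemma inQ_iota s : in_QW iota (iota s).
Proof. exists gone, s. by rewrite inv1 gmul1l gmul1r. Qed.
Definition qs (s : S) : QW iota := exist (in_QW iota) (iota s) (inQ_iota s).
Definition cj (g : W) (x : QW iota) : QW iota :=
  exist (in_QW iota) _ (inQ_conj g _ (proj2_sig x)).

Lemma e_eq (x y : QW iota) : proj1_sig x = proj1_sig y -> e x = e y.
Proof. by move/sig_eq->. Qed.

Lemma e_conj (x y w : QW iota) :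
  proj1_sig w = gmul (gmul (proj1_sig x) (proj1_sig y)) (proj1_sig x) ->
  gmul (gmul (e x) (e y)) (ginv (e x)) = e w.
Proof.
move=> Hw.
have E := proj1 HA w x y.
rewrite -E; last first.
  by rewrite Hw !gmulA QW_inv gmul1l -gmulA QW_inv gmul1r.
by rewrite !gmulA gmulVr gmul1l mulgK.
Qed.

Lemma sq_comm (x y : QW iota) :
  gmul (gmul (e x) (e x)) (e y) = gmul (e y) (gmul (e x) (e x)).
Proof.
have E1 := e_conj x y (cj (proj1_sig x) y).
have E2 := e_conj x (cj (proj1_sig x) y) y.
rewrite -{2}E2 /=; last by rewrite QW_ginv !gmulA QW_inv gmul1l -gmulA QW_inv gmul1r.
rewrite -E1 /=; last by rewrite QW_ginv.
by rewrite !gmulA !mulgVK.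
Qed.

Lemma sq_central (x : QW iota) g :
  gmul (gmul (e x) (e x)) g = gmul g (gmul (e x) (e x)).
Proof.
have [h [hh [he hu]]] := proj2 HA A e (proj1 HA).
set c := gmul (e x) (e x).
have E1 := hu id (fun a b => erefl) (fun _ => erefl) g.
have E2 := hu (fun g => gmul (gmul c g) (ginv c)).
have EE : g = gmul (gmul c g) (ginv c).
  rewrite [LHS]E1 [RHS]E2 //.
    exact: conj_hom.
  by move=> y; rewrite /c sq_comm mulgK.
by rewrite {2}EE mulgVK.
Qed.

Lemma sq_conj_word (L : seq S) : forall u v : QW iota,
  proj1_sig v = gmul (gmul (ginv (word_prod iota L)) (proj1_sig u)) (word_prod iota L) ->
  gmul (e v) (e v) = gmul (e u) (e u).
Proof.
elim: L => [|s L IH] u v /= Hv.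
  by rewrite (e_eq v u) // Hv inv1 gmul1l gmul1r.
rewrite (IH (cj (iota s) u) v); last by rewrite Hv invMg !gmulA.
rewrite -(e_conj (qs s) u (cj (iota s) u)); last by rewrite /= ginv_iota.
set c := e (qs s); set a := e u.
by rewrite !gmulA mulgVK -(gmulA c a a) -(sq_central u c) mulgK.
Qed.

Section S0.
Variable s0 : S.
Definition z := gmul (e (qs s0)) (e (qs s0)).

Lemma sq_z x : gmul (e x) (e x) = z.
Proof.
have [w Hw] := proj2 Hc (qs s0) x.
have [[L [_ HL]] _] := Hl w.
rewrite -HL in Hw.
exact: sq_conj_word Hw.
Qed.

Lemma zc g : gmul z g = gmul g z.
Proof. exact: sq_central. Qed.

Definition QG := Qgrp z zc.
Definition Eb (x : QW iota) : QG := cl z (e x).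

Lemma Q1 x : gmul (Eb x) (Eb x) = gone.
Proof.
rewrite /= /Eb (mulQ_cl _ zc); apply (cl_eq z).
exists 0%N, 1%N; by rewrite /= sq_z gmul1l !gmul1r.
Qed.
Lemma EbV x : ginv (Eb x) = Eb x.
Proof. by symmetry; apply inv_uniq; apply Q1. Qed.

Lemma Q3 x y w : proj1_sig w = gmul (gmul (proj1_sig y) (proj1_sig x)) (proj1_sig y) ->
  gmul (gmul (Eb y) (Eb x)) (ginv (Eb y)) = Eb w.
Proof.
move=> Hw; rewrite /Eb -(e_conj y x w Hw).
by rewrite !(cl_hom _ zc) (homV _ (cl_hom _ zc)).
Qed.

Lemma dihedral s t k : gpow (gmul (iota s) (iota t)) k = gone ->
  gpow (gmul (Eb (qs s)) (Eb (qs t)) : QG) k = gone.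
Proof.
move=> HU.
set u : QG := gmul (Eb (qs s)) (Eb (qs t)).
set U := gmul (iota s) (iota t).
pose P n := exists y : QW iota, proj1_sig y = gmul (gpow U n) (iota s) /\
   gmul (gpow u n) (Eb (qs s)) = Eb y.
have uEs : gmul u (Eb (qs s)) = gmul (Eb (qs s)) (ginv u).
  by rewrite /u invMg !EbV gmulA.
have step n : P n -> P n.+2.
  case=> y [Hy Ey]; exists (cj (iota s) (cj (iota t) y)); split.
    rewrite gpow_SS /= !ginv_iota Hy /U.
    by rewrite !gmulA.
  rewrite gpow_SS.
  rewrite -(gmulA u (gmul (gpow u n) u)) -(gmulA (gpow u n) u) uEs (gmulA (gpow u n)) Ey.
  have ->: gmul u (gmul (Eb y) (ginv u)) = gmul (gmul (Eb (qs s)) (gmul (gmul (Eb (qs t)) (Eb y)) (ginv (Eb (qs t))))) (ginv (Eb (qs s))).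
    by rewrite /u invMg !gmulA.
  rewrite (Q3 y (qs t) (cj (iota t) y)); last by rewrite /= ginv_iota.
  rewrite (Q3 (cj (iota t) y) (qs s) (cj (iota s) (cj (iota t) y))) //.
  by rewrite /= ginv_iota.
have base : P 0 /\ P 1.
  split.
    exists (qs s); split; [by rewrite /= gmul1l | exact: gmul1l].
  exists (cj (iota s) (qs t)); split.
    by rewrite /= ginv_iota /U gmul1r.
  rewrite -(Q3 (qs t) (qs s) (cj (iota s) (qs t))); last by rewrite /= ginv_iota.
  change (gpow u 1) with (gmul u gone).
  by rewrite EbV /u gmul1r.
have all n : P n /\ P n.+1.
  elim: n => // n [H0 H1]; split => //; exact: step H0.
have [y [Hy Ey]] := proj1 (all k).
rewrite HU gmul1l in Hy.
rewrite -[gpow u k]gmul1r -(Q1 (qs s)) gmulA Ey.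
have ->: Eb y = Eb (qs s) by rewrite /Eb (e_eq y (qs s) Hy).
by rewrite ?Q1.
Qed.

Lemma cox_QG : cox_rels m QG (fun s => Eb (qs s)).
Proof. move=> s t k Hk; apply dihedral; apply: (proj1 HW s t k Hk). Qed.

Definition word (w : W) : seq S :=
  proj1_sig (constructive_indefinite_description _ (proj1 (Hl w))).
Lemma word_spec w : size (word w) = l w /\ word_prod iota (word w) = w.
Proof. rewrite /word; case: constructive_indefinite_description => //. Qed.
Definition Eprod (L : seq S) : A := foldr (fun s acc => gmul (e (qs s)) acc) gone L.
Definition sigma (w : W) : A := Eprod (word w).

Lemma phi_Eprod L : phi (Eprod L) = word_prod iota L.
Proof. elim: L => [|s L IH] /=; first exact: hom1 _ Hphi. by rewrite Hphi IH Hphie. Qed.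
Lemma phi_sigma w : phi (sigma w) = w.
Proof. by rewrite /sigma phi_Eprod (proj2 (word_spec w)). Qed.

Lemma key_rel a b : exists m' n', gmul (gpow z m') (gmul (sigma a) (sigma b)) = gmul (gpow z n') (sigma (gmul a b)).
Proof.
have [psi [psih [psie _]]] := proj2 HW QG (fun s => Eb (qs s)) cox_QG.
have clE L : cl z (Eprod L) = psi (word_prod iota L).
  elim: L => [|s L IH] /=; first by rewrite (hom1 _ psih).
  by rewrite (cl_hom _ zc) IH psih psie.
apply (eq_cl z).
rewrite (cl_hom _ zc) /sigma !clE !(proj2 (word_spec _)).
by rewrite -psih.
Qed.

Lemma key_eq a b : exists n : Z,
  gmul (sigma a) (sigma b) = gmul (gzpow z n) (sigma (gmul a b)) /\
  (2 * n = Z.of_nat (l a) + Z.of_nat (l b) - Z.of_nat (l (gmul a b)))%Z.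
Proof.
have [m' [n' E]] := key_rel a b.
have [deg [degh [dege _]]] := proj2 HA Zgrp (fun _ => 1%Z) (ad_Z _ _ iota).
have degE L : deg (Eprod L) = Z.of_nat (size L).
  elim: L => [|s L IH] /=; first exact: (hom1 _ degh).
  rewrite degh IH dege. change (1 + Z.of_nat (size L) = Z.of_nat (size L).+1)%Z. lia.
have degs w : deg (sigma w) = Z.of_nat (l w) by rewrite /sigma degE (proj1 (word_spec w)).
have degz : deg z = 2%Z by rewrite /z degh dege.
exists (Z.of_nat n' - Z.of_nat m')%Z; split.
  by rewrite gzpow_diff -gmulA -E mulKg.
have := f_equal deg E; rewrite !degh !(hom_gpow _ degh) degz !Zgpow !degs.
move=> H; simpl in H; lia.
Qed.

End S0.

Lemma l_one : l gone = 0%N.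
Proof. have := proj2 (Hl gone) [::] erefl. by case: (l gone). Qed.

Lemma parity (s0 : S) a b : odd (l (gmul a b)) = xorb (odd (l a)) (odd (l b)).
Proof.
have [n [_ H]] := key_eq s0 a b.
move: H; rewrite (nat_oddZ (l a)) (nat_oddZ (l b)) (nat_oddZ (l (gmul a b))).
case: (odd (l a)); case: (odd (l b)); case: (odd (l (gmul a b))) => H; cbv beta iota in H; try reflexivity; exfalso; lia.
Qed.

Lemma final_inside :
  normalized_2cocycle (tau_rho l) /\
  forall q0 : QW iota, (exists s : S, proj1_sig q0 = iota s) ->
    class_eq_ext phi (gmul (e q0) (e q0)) (tau_rho l).
Proof.
split.
  split.
    by move=> w; rewrite /tau_rho l_one andbF.
  move=> a b c.
  have [x [w [s0 _]]] := proj1 Hc.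
  rewrite /tau_rho !(parity s0).
  by case: (odd (l a)); case: (odd (l b)); case: (odd (l c)).
move=> q0 [s Hs].
have -> : e q0 = e (qs s) by apply e_eq.
exists sigma, (fun w => Z.of_nat (l w)./2); split; first exact: phi_sigma.
move=> a b.
have [n [E H]] := key_eq s a b.
have P := parity s a b.
rewrite E; congr gmul; congr gzpow.
move: H P; rewrite /tau_rho (nat_oddZ (l a)) (nat_oddZ (l b)) (nat_oddZ (l (gmul a b))).
case: (odd (l a)); case: (odd (l b)); case: (odd (l (gmul a b))) => H P; cbv beta iota in H, P; cbv beta iota delta [andb]; try discriminate; lia.
Qed.

End Main.

Theorem theorem4p8
  (S : finType) (m : S -> S -> option nat) (Hm : coxeter_matrix m)
  (W : Grp) (iota : S -> W) (HW : is_presentation iota (cox_rels m))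
  (Hc : one_conj_class iota)
  (A : Grp) (e : QW iota -> A) (HA : is_presentation e (ad_rels iota))
  (phi : A -> W) (Hphi : hom phi) (Hphie : forall x, phi (e x) = proj1_sig x)
  (l : W -> nat) (Hl : forall w : W, is_length iota w (l w)) :
  normalized_2cocycle (tau_rho l) /\
  forall q0 : QW iota, (exists s : S, proj1_sig q0 = iota s) ->
    class_eq_ext phi (gmul (e q0) (e q0)) (tau_rho l).
Proof. exact: final_inside. Qed.
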